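(* Let $S$ be a linear relation in $\mathfrak H$ with numerical range $\mathcal W(S)=\{0\}$ (equivalently, $(\varphi',\varphi)=0$ for all $\{\varphi,\varphi'\}\in S$, i.e. $\mathrm{dom}\,S\perp\mathrm{ran}\,S$). Then $S$ is nonnegative, its Friedrichs extension is $S_{\rm F}=\overline{\mathrm{dom}}\,S\times\mathrm{mul}\,S^*$, and its Kreĭn type extension at $0$ is $S_{{\rm K},0}=\ker S^*\times\overline{\mathrm{ran}}\,S$.
   Context: Linear relations in $\mathfrak H$ are linear subspaces of $\mathfrak H\times\mathfrak H$; $\mathrm{dom},\mathrm{ran},\ker T=\{f:\{f,0\}\in T\},\mathrm{mul}\,T=\{g:\{0,g\}\in T\}$; $T^*$ adjoint, $T^{**}$ closure, products $RT=\{\{f,h\}:\exists g,\{f,g\}\in T,\{g,h\}\in R\}$. Numerical range $\mathcal W(S)=\{(\varphi',\varphi):\{\varphi,\varphi'\}\in S,\|\varphi\|=1\}$ (and $\{0\}$ if $\mathrm{dom}\,S=\{0\}$). For a nonnegative relation $S$, $\mathfrak t(S)[\varphi,\psi]=(\varphi',\psi)$ on $\mathrm{dom}\,S$; a representing map for $\mathfrak t(S)$ (with $c=0$) is a linear operator $Q$ into a Hilbert space with $\mathrm{dom}\,Q=\mathrm{dom}\,S$ and $\mathfrak t(S)[\varphi,\psi]=(Q\varphi,Q\psi)$; companion relation $J=\{\{Q\varphi,\varphi'\}:\{\varphi,\varphi'\}\in S\}$. Friedrichs extension $S_{\rm F}=Q^*Q^{**}$ and Kreĭn type extension $S_{{\rm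 K},0}=J^{**}J^*$ (both independent of the choice of $Q$). *)

(* Defs.v *)
From HB Require Import structures.
From mathcomp Require Import all_boot all_order all_algebra.
From mathcomp Require Import complex.
From mathcomp Require Import reals.
Set Implicit Arguments. Unset Strict Implicit. Unset Printing Implicit Defensive.
Import Order.TTheory GRing.Theory Num.Theory.
Local Open Scope ring_scope.

Notation cplx R := (complex.complex (reals.Real.sort R)).

Section HilbertDefs.
Variable R : realType.
Local Notation C := (cplx R).

Definition is_inner (H : lmodType C) (dot : H -> H -> C) : Prop :=
  [/\ (forall a x y z, dot (a *: x + y) z = a * dot x z + dot y z),
      (forall x y, dot y x = (dot x y)^*),
      (forall x, 0 <= dot x x) &
      (forall x, dot x x = 0 -> x = 0)].

Definition inorm (H : lmodType C) (dot : H -> H -> C) (x : H) : C :=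
  sqrtC (dot x x).

Definition complete_inner (H : lmodType C) (dot : H -> H -> C) : Prop :=
  forall u : nat -> H,
    (forall eps : C, 0 < eps -> exists N, forall m n, (N <= m)%N -> (N <= n)%N ->
        inorm dot (u m - u n) < eps) ->
    exists x, forall eps : C, 0 < eps -> exists N, forall n, (N <= n)%N ->
        inorm dot (u n - x) < eps.

Definition hilbert (H : lmodType C) (dot : H -> H -> C) : Prop :=
  is_inner dot /\ complete_inner dot.

Definition nclosure (H : lmodType C) (dot : H -> H -> C) (M : H -> Prop) : H -> Prop :=
  fun x => forall eps : C, 0 < eps -> exists y, M y /\ inorm dot (x - y) < eps.

(* Linear relations from H to K: linear subspaces of H x K, given as predicates. *)
Definition linrel (H K : lmodType C) (T : H -> K -> Prop) : Prop :=
  [/\ T 0 0,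
      (forall f g f' g', T f g -> T f' g' -> T (f + f') (g + g')) &
      (forall (a : C) f g, T f g -> T (a *: f) (a *: g))].

Definition rdom (H K : lmodType C) (T : H -> K -> Prop) : H -> Prop :=
  fun f => exists g, T f g.
Definition rran (H K : lmodType C) (T : H -> K -> Prop) : K -> Prop :=
  fun g => exists f, T f g.
Definition rker (H K : lmodType C) (T : H -> K -> Prop) : H -> Prop :=
  fun f => T f 0.
Definition rmul (H K : lmodType C) (T : H -> K -> Prop) : K -> Prop :=
  fun g => T 0 g.

Definition radj (H K : lmodType C) (dotH : H -> H -> C) (dotK : K -> K -> C)
  (T : H -> K -> Prop) : K -> H -> Prop :=
  fun h k => forall f g, T f g -> dotH k f = dotK h g.

Definition rprod (H K L : lmodType C) (Rr : K -> L -> Prop) (T : H -> K -> Prop)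
  : H -> L -> Prop :=
  fun f h => exists g, T f g /\ Rr g h.

Definition numrange (H : lmodType C) (dot : H -> H -> C) (S : H -> H -> Prop)
  : C -> Prop :=
  fun z => (exists phi phi', S phi phi' /\ inorm dot phi = 1 /\ z = dot phi' phi)
        \/ ((forall phi, rdom S phi -> phi = 0) /\ z = 0).

Definition nonneg_rel (H : lmodType C) (dot : H -> H -> C) (S : H -> H -> Prop) : Prop :=
  forall phi phi', S phi phi' -> 0 <= dot phi' phi.

(* Q : H -> K is a representing map (with c = 0) for the form t(S):
   a linear operator with dom Q = dom S and t(S)[phi,psi] = (Q phi, Q psi). *)
Definition representing_map (H K : lmodType C) (dotH : H -> H -> C)
  (dotK : K -> K -> C) (S : H -> H -> Prop) (Q : H -> K -> Prop) : Prop :=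
  [/\ linrel Q,
      (forall f g1 g2, Q f g1 -> Q f g2 -> g1 = g2),
      (forall f, rdom Q f <-> rdom S f) &
      (forall phi phi' psi y z, S phi phi' ->
          Q phi y -> Q psi z -> dotH phi' psi = dotK y z)].

Definition companion (H K : lmodType C) (S : H -> H -> Prop) (Q : H -> K -> Prop)
  : K -> H -> Prop :=
  fun y g => exists phi, S phi g /\ Q phi y.

(* Friedrichs extension S_F = Q^* Q^** . *)
Definition friedrichs (H K : lmodType C) (dotH : H -> H -> C) (dotK : K -> K -> C)
  (Q : H -> K -> Prop) : H -> H -> Prop :=
  rprod (radj dotH dotK Q) (radj dotK dotH (radj dotH dotK Q)).

(* Krein type extension S_{K,0} = J^** J^* . *)
Definition krein0 (H K : lmodType C) (dotH : H -> H -> C) (dotK : K -> K -> C)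
  (S : H -> H -> Prop) (Q : H -> K -> Prop) : H -> H -> Prop :=
  let J := companion S Q in
  rprod (radj dotH dotK (radj dotK dotH J)) (radj dotK dotH J).

End HilbertDefs.

(* Main.v *)
Require Import Defs.
From mathcomp Require Import all_boot all_order all_algebra.
From mathcomp Require Import complex reals classical_sets boolp.
From mathcomp Require Import ring lra.
Import Order.TTheory GRing.Theory Num.Theory.
Local Open Scope ring_scope.

Section Hil.
Variable R : realType.
Local Notation C := (cplx R).
Variable H : lmodType C.
Variable dot : H -> H -> C.
Hypothesis hd : is_inner dot.

Lemma dotDl a x y z : dot (a *: x + y) z = a * dot x z + dot y z.
Proof. by case: hd => h1 _ _ _; apply: h1. Qed.
Lemma dotC x y : dot y x = (dot x y)^*.
Proof. by case: hd => _ h1 _ _; apply: h1. Qed.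
Lemma dot_ge0 x : 0 <= dot x x.
Proof. by case: hd => _ _ h1 _; apply: h1. Qed.
Lemma dot_eq0 x : dot x x = 0 -> x = 0.
Proof. by case: hd => _ _ _ h1; apply: h1. Qed.

Lemma dot0l z : dot 0 z = 0.
Proof.
have := dotDl 1 0 0 z; rewrite scaler0 addr0 mul1r => h.
by apply: (addrI (dot 0 z)); rewrite addr0 -h.
Qed.
Lemma dotZl a x z : dot (a *: x) z = a * dot x z.
Proof. by have := dotDl a x 0 z; rewrite addr0 dot0l addr0. Qed.
Lemma dotDl' x y z : dot (x + y) z = dot x z + dot y z.
Proof. by have := dotDl 1 x y z; rewrite scale1r mul1r. Qed.
Lemma dotNl x z : dot (- x) z = - dot x z.
Proof. by rewrite -scaleN1r dotZl mulN1r. Qed.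
Lemma dotBl x y z : dot (x - y) z = dot x z - dot y z.
Proof. by rewrite dotDl' dotNl. Qed.
Lemma dot0r z : dot z 0 = 0.
Proof. by rewrite dotC dot0l conjC0. Qed.
Lemma dotZr a x y : dot x (a *: y) = a^* * dot x y.
Proof. by rewrite dotC dotZl rmorphM /= -dotC. Qed.
Lemma dotDr x y z : dot x (y + z) = dot x y + dot x z.
Proof. by rewrite dotC dotDl' rmorphD /= -!dotC. Qed.
Lemma dotNr x z : dot x (- z) = - dot x z.
Proof. by rewrite dotC dotNl rmorphN /= -dotC. Qed.
Lemma dotBr x y z : dot x (y - z) = dot x y - dot x z.
Proof. by rewrite dotDr dotNr. Qed.

Definition nn x : R := complex.Re (dot x x).
Definition sq (c : C) : R := complex.Re c ^+ 2 + complex.Im c ^+ 2.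

Lemma dotxx x : dot x x = (nn x)%:C%C.
Proof.
rewrite /nn; have := dot_ge0 x; case: (dot x x) => a b.
by rewrite lecE /= => /andP[/eqP -> _].
Qed.
Lemma nn_ge0 x : 0 <= nn x.
Proof. by have := dot_ge0 x; rewrite dotxx ler0c. Qed.
Lemma nn_eq0 x : nn x = 0 -> x = 0.
Proof. by move=> h; apply: dot_eq0; rewrite dotxx h. Qed.
Lemma nnN x : nn (- x) = nn x.
Proof. by rewrite /nn dotNl dotNr opprK. Qed.
Lemma nnB x y : nn (x - y) = nn (y - x).
Proof. by rewrite -nnN opprB. Qed.

Lemma mulJ (c : C) : c * c^* = (sq c)%:C%C.
Proof. by rewrite -normCK -add_Re2_Im2. Qed.
Lemma sq_ge0 c : 0 <= sq c.
Proof. by rewrite /sq addr_ge0 ?sqr_ge0. Qed.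
Lemma sq_eq0 c : sq c = 0 -> c = 0.
Proof.
case: c => a b; rewrite /sq /= => /eqP; rewrite paddr_eq0 ?sqr_ge0 //.
by rewrite !sqrf_eq0 => /andP[/eqP -> /eqP ->].
Qed.
Lemma sqD c e : sq (c + e) <= 2 * sq c + 2 * sq e.
Proof.
case: c e => a b [a' b']; rewrite /sq /=.
rewrite -subr_ge0.
have -> : 2 * (a ^+ 2 + b ^+ 2) + 2 * (a' ^+ 2 + b' ^+ 2) - ((a + a') ^+ 2 + (b + b') ^+ 2)
  = (a - a') ^+ 2 + (b - b') ^+ 2 by ring.
by rewrite addr_ge0 ?sqr_ge0.
Qed.
Lemma sqR r : sq (r%:C%C) = r ^+ 2.
Proof. by rewrite /sq /= expr0n /= addr0. Qed.
Lemma conjR r : (r%:C%C)^* = r%:C%C :> C.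
Proof. by apply/conj_Creal; rewrite complex_real. Qed.

Lemma dotZZ c x y : dot (c *: x) (c *: y) = (sq c)%:C%C * dot x y.
Proof. by rewrite dotZl dotZr mulrA mulJ. Qed.


Lemma nn_shift v a s :
  nn (v - (s%:C%C * dot v a) *: a) =
  nn v - 2 * s * sq (dot v a) + s ^+ 2 * sq (dot v a) * nn a.
Proof.
set c := dot v a.
have h : dot (v - (s%:C%C * c) *: a) (v - (s%:C%C * c) *: a) =
   (nn v - 2 * s * sq c + s ^+ 2 * sq c * nn a)%:C%C.
  rewrite dotBl !dotBr !dotZl !dotZr -/c (dotC v a) -/c !dotxx rmorphM /= conjR.
  rewrite !rmorphD !rmorphN !rmorphM rmorph_nat /= -mulJ.
  ring.
by rewrite /nn h.
Qed.

Lemma ltC_real (eps : C) : 0 < eps -> eps = (complex.Re eps)%:C%C /\ 0 < complex.Re eps.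
Proof. by case: eps => a b; rewrite ltcE /= => /andP[/eqP -> h]. Qed.

Lemma inorm_lt v r : 0 < r -> (inorm dot v < r%:C%C) = (nn v < r ^+ 2).
Proof.
move=> r0; rewrite /inorm dotxx -(sqrCK (x:=r%:C%C)) ?ler0c ?ltW //.
rewrite ltr_sqrtC ?nnegrE -?rmorphXn ?ltcR ?ler0c ?nn_ge0 //.
by rewrite exprn_ge0 // ltW.
Qed.

Lemma nclos_nn M x : nclosure dot M x <->
  forall e, 0 < e -> exists m, M m /\ nn (x - m) < e.
Proof.
split.
  move=> h e e0; have e1 : 0 < (Num.sqrt e)%:C%C :> C by rewrite ltcR sqrtr_gt0.
  have [m [Mm hm]] := h _ e1.
  exists m; split => //; move: hm; rewrite inorm_lt ?sqrtr_gt0 // sqr_sqrtr //; exact: ltW.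
move=> h eps /ltC_real[-> e0]; have [m [Mm hm]] := h _ (exprn_gt0 2 e0).
by exists m; split => //; rewrite inorm_lt.
Qed.

Lemma complete_nn (hc : complete_inner dot) (u : nat -> H) :
  (forall e, 0 < e -> exists N, forall m n, (N <= m)%N -> (N <= n)%N -> nn (u m - u n) < e) ->
  exists p, forall e, 0 < e -> exists N, forall n, (N <= n)%N -> nn (u n - p) < e.
Proof.
move=> h; have [p hp] : exists p, forall eps : C, 0 < eps -> exists N, forall n, (N <= n)%N ->
        inorm dot (u n - p) < eps.
  apply: hc => eps /ltC_real[-> e0]; have [N hN] := h _ (exprn_gt0 2 e0).
  by exists N => m n hm hn; rewrite inorm_lt // hN.
exists p => e e0; have e1 : 0 < (Num.sqrt e)%:C%C :> C by rewrite ltcR sqrtr_gt0.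
have [N hN] := hp _ e1.
exists N => n hn; have := hN n hn; rewrite inorm_lt ?sqrtr_gt0 // sqr_sqrtr //; exact: ltW.
Qed.

Lemma shift_le v a s : s = (nn a + 1)^-1 ->
  s * sq (dot v a) <= nn v - nn (v - (s%:C%C * dot v a) *: a).
Proof.
move=> hs; rewrite nn_shift; set q := sq _; set k := nn a.
have k0 : 0 <= k := nn_ge0 a; have q0 : 0 <= q := sq_ge0 _.
have sk : s * (k + 1) = 1 by rewrite hs mulVf // gt_eqF //; lra.
have e : s ^+ 2 * q * k = s * q * (s * (k + 1)) - s ^+ 2 * q by ring.
rewrite e sk mulr1.
have : 0 <= s ^+ 2 * q by rewrite mulr_ge0 // exprn_ge0 // hs invr_ge0; lra.
lra.
Qed.

Lemma csl v a : sq (dot v a) <= nn v * (nn a + 1).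
Proof.
have k0 : 0 < nn a + 1 by have := nn_ge0 a; lra.
have := shift_le v a _ erefl; rewrite mulrC -ler_pdivrMr //.
have := nn_ge0 (v - ((nn a + 1)^-1%:C%C * dot v a) *: a).
set t := nn _; set q := sq _; move=> t0 h.
have : q / (nn a + 1) <= nn v by lra.
by rewrite ler_pdivrMr.
Qed.

Lemma le0_small (q : R) : (forall e, 0 < e -> q < e) -> q <= 0.
Proof. move=> h; rewrite leNgt; apply/negP => q0; by have := h q q0; rewrite ltxx. Qed.

Lemma archi_small (e : R) : 0 < e -> exists N, forall n, (N <= n)%N -> (n.+1%:R)^-1 < e.
Proof.
move=> e0; have ei : 0 <= e^-1 by rewrite invr_ge0 ltW.
exists (Num.Def.archi_bound e^-1) => n hn.
have h1 := archi_boundP ei.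
have h2 : (Num.Def.archi_bound e^-1)%:R <= n.+1%:R :> R by rewrite ler_nat; apply: leq_trans hn _.
have h3 : e^-1 < n.+1%:R by apply: lt_le_trans h1 h2.
rewrite -(invrK e) ltf_pV2 // ?posrE ?invr_gt0 //.
Qed.

Lemma closure_perp M x k : nclosure dot M x -> (forall a, M a -> dot k a = 0) ->
  dot x k = 0.
Proof.
move=> /nclos_nn hx hk; apply: sq_eq0; apply/eqP; rewrite eq_le sq_ge0 andbT.
apply: le0_small => e e0.
have k0 : 0 < nn k + 1 by have := nn_ge0 k; lra.
have [m [Mm hm]] := hx (e / (nn k + 1)) (divr_gt0 e0 k0).
have <- : dot (x - m) k = dot x k by rewrite dotBl (dotC k m) hk // conjC0 subr0.
apply: le_lt_trans (csl _ _) _; by rewrite -ltr_pdivlMr.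
Qed.

Lemma paral a b : nn (a - b) + nn (a + b) = 2 * nn a + 2 * nn b.
Proof.
apply: (@complexI R); rewrite !rmorphD !rmorphM rmorph_nat /= -!dotxx.
rewrite !dotBl !dotDl' !dotBr !dotDr; ring.
Qed.

Lemma nnZ r y : nn (r%:C%C *: y) = r ^+ 2 * nn y.
Proof. by rewrite /nn dotZZ sqR dotxx -rmorphM. Qed.

Lemma perp_closure (hc : complete_inner dot) (M : H -> Prop) (M0 : M 0)
  (MD : forall x y, M x -> M y -> M (x + y))
  (MZ : forall (a : C) x, M x -> M (a *: x)) x :
  (forall k, (forall a, M a -> dot k a = 0) -> dot x k = 0) -> nclosure dot M x.
Proof.
move=> hx.
pose E := [set r : R | exists m, M m /\ r = nn (x - m)]%classic.
have E0 : E (nn (x - 0)) by exists 0.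
have hE : has_inf E.
  split; first by exists (nn (x - 0)).
  by exists 0 => r [m [_ ->]]; exact: nn_ge0.
set d := inf E.
have dle : forall m, M m -> d <= nn (x - m).
  by move=> m Mm; apply: (ge_inf hE.2); exists m.
have adh : forall n : nat, exists m, M m /\ nn (x - m) < d + n.+1%:R^-1.
  move=> n; have n0 : 0 < (n.+1%:R : R)^-1 by rewrite invr_gt0 ltr0Sn.
  have [r [m [Mm ->]] hr] := inf_adherent n0 hE.
  by exists m.
pose u n := proj1_sig (cid (adh n)).
have hu : forall n, M (u n) /\ nn (x - u n) < d + n.+1%:R^-1 :=
  fun n => proj2_sig (cid (adh n)).
have cau : forall m n, nn (u m - u n) <= 2 * m.+1%:R^-1 + 2 * n.+1%:R^-1.
  move=> m n; have := paral (x - u n) (x - u m).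
  have -> : x - u n - (x - u m) = u m - u n.
    by rewrite opprB addrC addrA subrK.
  have -> : x - u n + (x - u m) = (2 : R)%:C%C *: (x - (2^-1 : R)%:C%C *: (u n + u m)).
    have two : (2 : R) != 0 by rewrite pnatr_eq0.
    rewrite scalerBr scalerA -rmorphM mulfV // rmorph1 scale1r.
    by rewrite rmorph_nat scaler_nat mulr2n opprD addrACA.
  rewrite nnZ.
  have := dle _ (MZ (2^-1 : R)%:C%C _ (MD _ _ (hu n).1 (hu m).1)).
  have := (hu m).2; have := (hu n).2.
  move: (m.+1%:R^-1) (n.+1%:R^-1) => a b.
  lra.
have cauchy : forall e, 0 < e -> exists N, forall m n, (N <= m)%N -> (N <= n)%N ->
    nn (u m - u n) < e.
  move=> e e0; have e4 : 0 < e / 4 by rewrite divr_gt0.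
  have [N hN] := archi_small _ e4.
  exists N => m n hm hn; have := cau m n; have := hN m hm; have := hN n hn.
  move: (m.+1%:R^-1) (n.+1%:R^-1) => a b.
  lra.
have [p hp] := complete_nn hc _ cauchy.
have pcl : nclosure dot M p.
  apply/nclos_nn => e e0; have [N hN] := hp e e0; exists (u N); split.
    exact: (hu N).1.
  by rewrite nnB; apply: hN.
have wperp : forall a, M a -> dot (x - p) a = 0.
  move=> a Ma; apply: sq_eq0; apply/eqP; rewrite eq_le sq_ge0 andbT.
  apply: le0_small => e e0.
  set K := nn a + 1; have K0 : 0 < K by have := nn_ge0 a; rewrite /K; lra.
  have e4 : 0 < e / (4 * K) by rewrite divr_gt0 // mulr_gt0.
  have [N1 hN1] := hp _ e4; have [N2 hN2] := archi_small _ e4.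
  have hn1 := hN1 (maxn N1 N2) (leq_maxl _ _).
  have hn2 := hN2 (maxn N1 N2) (leq_maxr _ _).
  move: (maxn N1 N2) hn1 hn2 => n hn1 hn2.
  have -> : x - p = (x - u n) + (u n - p) by rewrite addrA subrK.
  rewrite dotDl'.
  set c := dot (x - u n) a; set f := dot (u n - p) a.
  have hf : sq f <= nn (u n - p) * K := csl _ _.
  have hc1 : K^-1 * sq c <= nn (x - u n) - d.
    have := shift_le (x - u n) a _ erefl; rewrite -/K -/c.
    set t := (K^-1)%:C%C * c.
    have := dle _ (MD _ _ (hu n).1 (MZ t _ Ma)).
    have -> : x - (u n + t *: a) = x - u n - t *: a by rewrite opprD addrA.
    lra.
  have hc2 : sq c <= (nn (x - u n) - d) * K.
    by rewrite -ler_pdivrMr // mulrC.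
  have hK1 : (nn (x - u n) - d) * K < e / (4 * K) * K.
    rewrite ltr_pM2r //; have := (hu n).2; move: hn2.
    move: (n.+1%:R^-1) => b; lra.
  have hK2 : nn (u n - p) * K < e / (4 * K) * K by rewrite ltr_pM2r.
  have eK : e / (4 * K) * K = e / 4.
    by field; rewrite gt_eqF.
  have := sqD c f; rewrite eK in hK1 hK2.
  lra.
have xw : dot x (x - p) = 0 := hx _ wperp.
have pw : dot p (x - p) = 0 := closure_perp _ _ _ pcl wperp.
have w0 : x - p = 0 by apply: dot_eq0; rewrite dotBl xw pw subrr.
by have -> : x = p by apply/eqP; rewrite -subr_eq0 w0.
Qed.

End Hil.
Arguments nn {R H}. Arguments sq {R}. Arguments sqR {R}.
Arguments dot0r {R H dot}. Arguments dot0l {R H dot}. Arguments dotZZ {R H dot}.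
Arguments dotxx {R H dot}. Arguments nn_ge0 {R H dot}. Arguments nn_eq0 {R H dot}.
Arguments dot_eq0 {R H dot}. Arguments closure_perp {R H dot}.
Arguments perp_closure {R H dot}.

Theorem lemma8p2 (R : realType) (H : lmodType (cplx R))
  (dot : H -> H -> cplx R) (hH : hilbert dot)
  (S : H -> H -> Prop) (hS : linrel S)
  (hW : forall z, numrange dot S z <-> z = 0) :
  nonneg_rel dot S /\
  (forall (K : lmodType (cplx R)) (dotK : K -> K -> cplx R) (Q : H -> K -> Prop),
     hilbert dotK -> representing_map dot dotK S Q ->
     (forall f h, friedrichs dot dotK Q f h <->
        nclosure dot (rdom S) f /\ rmul (radj dot dot S) h) /\
     (forall f h, krein0 dot dotK S Q f h <->
        rker (radj dot dot S) f /\ nclosure dot (rran S) h)).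
Proof.
have [hd hc] := hH.
case: hS => S00 SD SZ.
have hA : forall phi phi', S phi phi' -> dot phi' phi = 0.
  move=> phi phi' Sp.
  have [->|phi0] := eqVneq phi 0; first by rewrite (dot0r hd).
  have np : 0 < nn dot phi.
    rewrite lt_def nn_ge0 // andbT; apply/negP => /eqP h.
    by move/eqP: phi0; apply; exact: nn_eq0 hd _ h.
  set r := Num.sqrt (nn dot phi).
  have r0 : 0 < r by rewrite sqrtr_gt0.
  set a : cplx R := (r^-1)%:C%C.
  have ha : sq a * nn dot phi = 1.
    rewrite sqR -[nn dot phi](sqr_sqrtr (ltW np)) -/r exprVn mulVf //.
    by rewrite expf_neq0 // gt_eqF.
  have hz : numrange dot S (dot (a *: phi') (a *: phi)).
    left; exists (a *: phi), (a *: phi'); split; first exact: SZ.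
    split=> //.
    by rewrite /inorm (dotZZ hd) (dotxx hd) -rmorphM ha rmorph1 sqrtC1.
  move/hW: hz; rewrite (dotZZ hd) => /eqP; rewrite mulf_eq0 => /orP[|/eqP//].
  move=> /eqP h; have h0 : sq a = 0 by case: h.
  by move: ha; rewrite h0 mul0r => /eqP; rewrite eq_sym oner_eq0.
split; first by move=> phi phi' /hA ->.
move=> K dotK Q [hdK hcK] [hQlin hQfun hQdom hQS].
have hQ0 : forall f y, Q f y -> y = 0.
  move=> f y Qfy; have [phi' Sf] : rdom S f by apply/hQdom; exists y.
  apply: (dot_eq0 hdK); rewrite -(hQS _ _ _ _ _ Sf Qfy Qfy); exact: hA.
have clos_iff : forall M : H -> Prop, M 0 -> (forall x y, M x -> M y -> M (x + y)) ->
   (forall (a : cplx R) x, M x -> M (a *: x)) -> forall x,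
   nclosure dot M x <-> (forall k, (forall a, M a -> dot k a = 0) -> dot x k = 0).
  move=> M M0 MD MZ x; split.
    by move=> hx k hk; exact: closure_perp hd _ _ _ hx hk.
  exact: perp_closure hd hc M M0 MD MZ x.
have domI := clos_iff (rdom S) (ex_intro _ 0 S00)
  (fun x y '(ex_intro gx hx) '(ex_intro gy hy) => ex_intro _ _ (SD _ _ _ _ hx hy))
  (fun a x '(ex_intro gx hx) => ex_intro _ _ (SZ a _ _ hx)).
have ranI := clos_iff (rran S) (ex_intro _ 0 S00)
  (fun x y '(ex_intro gx hx) '(ex_intro gy hy) => ex_intro _ _ (SD _ _ _ _ hx hy))
  (fun a x '(ex_intro gx hx) => ex_intro _ _ (SZ a _ _ hx)).
split.
  move=> f h; split.
    case=> g [Q2 Q1]; split.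
      apply/domI => k hk.
      have : radj dot dotK Q 0 k.
        move=> f0 g0 Qf; rewrite (dot0l hdK); apply: hk; apply/hQdom; by exists g0.
      by move/Q2; rewrite (dot0r hdK) => <-.
    move=> a b Sab; have [y Qay] : rdom Q a by apply/hQdom; exists b.
    by rewrite (Q1 _ _ Qay) (hQ0 _ _ Qay) (dot0r hdK) (dot0l hd).
  case=> fcl hm; exists 0; split.
    move=> h0 k0 hk0; rewrite (dot0l hdK); symmetry. have := proj1 (domI f) fcl k0. apply.
    move=> a [b Sab]; have [y Qay] : rdom Q a by apply/hQdom; exists b.
    by rewrite (hk0 _ _ Qay) (hQ0 _ _ Qay) (dot0r hdK).
  move=> f0 g0 Qf; rewrite (dot0l hdK).
  have [b Sb] : rdom S f0 by apply/hQdom; exists g0.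
  by rewrite (hm _ _ Sb) (dot0l hd).
move=> f h; split.
  case=> g [J1 J2]; split.
    move=> a b Sab; have [y Qay] : rdom Q a by apply/hQdom; exists b.
    have := J1 y b (ex_intro _ a (conj Sab Qay)).
    by rewrite (hQ0 _ _ Qay) (dot0r hdK) (dot0l hd) => <-.
  apply/ranI => k hk.
  have : radj dotK dot (companion S Q) k 0.
    move=> y0 g0 [phi [Sp Qp]]; rewrite (dot0l hdK) hk //; by exists phi.
  by move/J2 => ->; rewrite (dot0r hdK).
case=> hk hcl; exists 0; split.
  move=> y0 g0 [phi [Sp Qp]].
  by rewrite (dot0l hdK) -(hk _ _ Sp) (dot0l hd).
move=> h0 k0 hj; rewrite (dot0l hdK); have := proj1 (ranI h) hcl h0; apply.
move=> b [a Sab]; have [y Qay] : rdom Q a by apply/hQdom; exists b.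
have := hj y b (ex_intro _ a (conj Sab Qay)).
by rewrite (hQ0 _ _ Qay) (dot0r hdK) => <-.
Qed.
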